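(* Let $(M,d)$ be a complete pointed metric space and let $\mu,\nu$ be positive Radon measures on $\beta\widetilde{M}$. Then $\mu\preccurlyeq\nu$ and $\nu\preccurlyeq\mu$ if and only if $q_\sharp\mu=q_\sharp\nu$.
   Context: $\widetilde{M}=\{(x,y)\in M\times M:x\ne y\}$, $\beta\widetilde{M}$ its Stone–Čech compactification; Radon measures identified with $C(\beta\widetilde{M})^*$. $G$ is the set of $g\in C(\beta\widetilde{M})$ with $d(x,y)g(x,y)\le d(x,u)g(x,u)+d(u,y)g(u,y)$ for all distinct $x,u,y\in M$; $\mu\preccurlyeq\nu$ iff $\int g\,d\mu\le\int g\,d\nu$ for all $g\in G$. Define $\zeta\sim\omega$ on $\beta\widetilde{M}$ iff $g(\zeta)=g(\omega)$ for all $g\in G$; $\widetilde{M}^G=\beta\widetilde{M}/\!\sim$ with the quotient topology (compact Hausdorff), $q:\beta\widetilde{M}\to\widetilde{M}^G$ the quotient map, and $q_\sharp$ the pushforward of measures. Throughout, $M$ has at least three distinct points. *)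

(* Defs.v *)
From HB Require Import structures.
From mathcomp Require Import all_boot all_order all_algebra generic_quotient.
From mathcomp Require Import all_classical all_reals all_analysis.

Set Implicit Arguments.
Unset Strict Implicit.
Unset Printing Implicit Defensive.

Import Order.TTheory GRing.Theory Num.Theory numFieldNormedType.Exports.
Local Open Scope classical_set_scope.
Local Open Scope ring_scope.
Local Open Scope quotient_scope.

Definition complete_space (T : uniformType) : Prop :=
  forall F : set_system T, ProperFilter F -> cauchy F -> exists x : T, F --> x.

Definition offdiag (M : Type) : set (M * M) := [set p | p.1 <> p.2].
Definition Mtilde (M : topologicalType) : topologicalType :=
  set_type (@offdiag M).

Definition is_stone_cech (X B : topologicalType) (i : X -> B) : Prop :=
  [/\ compact [set: B] /\ hausdorff_space B, continuous i,
      injective i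
      /\ (forall U : set X, open U -> exists V : set B, open V /\ U = i @^-1` V),
      dense (range i)
    & forall (K : topologicalType) (f : X -> K),
        compact [set: K] -> hausdorff_space K -> continuous f ->
        exists F : B -> K, continuous F /\ F \o i = f].

(** Positive Radon measures on a compact Hausdorff space B, identified
    (Riesz) with positive linear functionals on C(B) = continuous real
    functions on B; [L f] is [\int f dmu].  Only values on continuous
    functions are meaningful. *)
Definition positive_radon (R : realType) (B : topologicalType)
    (L : (B -> R) -> R) : Prop :=
  [/\ forall f g : B -> R, continuous f -> continuous g ->
        L (fun x => f x + g x) = L f + L g,
      forall (a : R) (f : B -> R), continuous f ->
        L (fun x => a * f x) = a * L f
    & forall f : B -> R, continuous f -> (forall x, 0 <= f x) -> 0 <= L f].

Section G_def.
Variables (R : realType) (M : metricType R) (B : topologicalType)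
          (i : Mtilde M -> B).

Local Notation d := (@mdist R M).

(** The cone G of C(beta M~): continuous g with
    d(x,y) g(x,y) <= d(x,u) g(x,u) + d(u,y) g(u,y) for distinct x,u,y.
    Here p = (x,y), q = (x,u), r = (u,y). *)
Definition Gset : set (B -> R) :=
  [set g | continuous g /\
     forall p q r : Mtilde M,
       (set_val p).1 = (set_val q).1 -> (set_val q).2 = (set_val r).1 ->
       (set_val r).2 = (set_val p).2 ->
       d (set_val p).1 (set_val p).2 * g (i p)
       <= d (set_val q).1 (set_val q).2 * g (i q)
        + d (set_val r).1 (set_val r).2 * g (i r)].

Definition Gle (mu nu : (B -> R) -> R) : Prop :=
  forall g, Gset g -> mu g <= nu g.

Definition Grel : rel B := fun z w => `[< forall g, Gset g -> g z = g w >].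

Lemma Grel_refl : reflexive Grel.
Proof. by move=> z; apply/asboolP. Qed.

Lemma Grel_sym : symmetric Grel.
Proof.
by move=> z w; apply/asboolP/asboolP => H g Gg; rewrite H.
Qed.

Lemma Grel_trans : transitive Grel.
Proof.
by move=> w z u /asboolP H1 /asboolP H2; apply/asboolP => g Gg;
  rewrite H1 // H2.
Qed.

Canonical Grel_equiv := EquivRel Grel Grel_refl Grel_sym Grel_trans.

Definition MtildeG : topologicalType :=
  quotient_topology {eq_quot Grel_equiv}.
Definition qmap : B -> MtildeG := \pi_MtildeG.

Definition qpush (mu : (B -> R) -> R) : (MtildeG -> R) -> R :=
  fun phi => mu (phi \o qmap).

End G_def.

Arguments qpush [R M B] i mu _.
Arguments MtildeG [R M B] i.
Arguments qmap [R M B] i.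

Definition radon_eq (R : realType) (T : topologicalType)
    (mu nu : (T -> R) -> R) : Prop :=
  forall phi : T -> R, continuous phi -> mu phi = nu phi.

(* Main.v *)
Require Import Defs.
From HB Require Import structures.
From mathcomp Require Import all_boot all_order all_algebra generic_quotient.
From mathcomp Require Import all_classical all_reals all_analysis.
From mathcomp Require Import lra ring finmap.
Import Order.TTheory GRing.Theory Num.Theory numFieldNormedType.Exports.

Local Open Scope classical_set_scope.
Local Open Scope ring_scope.

Definition pointedB {B : topologicalType} (b : B) : Type := B.
HB.instance Definition _ (B : topologicalType) (b : B) := Topological.copy (pointedB b) B.
HB.instance Definition _ (B : topologicalType) (b : B) := isPointed.Build (pointedB b) b.
Lemma cover_compactP (B : topologicalType) : compact [set: B] -> cover_compact [set: B].
Proof.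
move=> cB I D f Hf Hcov.
have [[b _]|nB] := pselect (exists b : B, True).
  have cB' : compact [set: pointedB b] := cB.
  by rewrite compact_cover in cB'; exact: cB'.
by exists (fset0 : {fset I})%fset => // x; exfalso; apply: nB; exists x.
Qed.

Section Aux.
Variables (R : realType) (B : topologicalType).

Lemma contD (f g : B -> R) : continuous f -> continuous g ->
  continuous (fun x => f x + g x).
Proof. move=> cf cg x; exact: (@continuousD R R^o B f g x (cf x) (cg x)). Qed.

Lemma contC (a : R) : continuous (fun _ : B => a).
Proof. exact: cst_continuous. Qed.

Lemma contM (a : R) (f : B -> R) : continuous f -> continuous (fun x => a * f x).
Proof. move=> cf x; exact: (@continuousM R B (fun _ => a) f x (contC a x) (cf x)). Qed.

Lemma contN (f : B -> R) : continuous f -> continuous (fun x => - f x).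
Proof.
move=> cf; have -> : (fun x => - f x) = (fun x => -1 * f x).
  by apply/funext => x; rewrite mulN1r.
by apply: contM.
Qed.

Lemma contB (f g : B -> R) : continuous f -> continuous g ->
  continuous (fun x => f x - g x).
Proof. by move=> cf cg; apply: contD => //; apply: contN. Qed.

Lemma contMax (f g : B -> R) : continuous f -> continuous g ->
  continuous (fun x => Num.max (f x) (g x)).
Proof. move=> cf cg; exact: max_fun_continuous. Qed.

Lemma contMin (f g : B -> R) : continuous f -> continuous g ->
  continuous (fun x => Num.min (f x) (g x)).
Proof. move=> cf cg; exact: min_fun_continuous. Qed.

Lemma open_ltf (f g : B -> R) : continuous f -> continuous g ->
  open [set x | f x < g x].
Proof.
move=> cf cg.
have -> : [set x | f x < g x] = (fun x => g x + (-1) * f x) @^-1` [set y | 0 < y].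
  by apply/seteqP; split=> x /=; lra.
apply: (continuousP _).1; last exact: open_gt.
by apply: contD => //; apply: contM.
Qed.

Lemma cover_max (P : set (B -> R)) (F : B -> R) (e : R) :
  compact [set: B] -> continuous F -> (forall h, P h -> continuous h) ->
  (forall h1 h2, P h1 -> P h2 -> P (fun x => Num.max (h1 x) (h2 x))) ->
  forall h0, P h0 ->
  (forall c, exists h, P h /\ F c - e < h c) ->
  exists h, P h /\ forall x, F x - e < h x.
Proof.
move=> cB cF cP Pmax h0 Ph0 loc.
have [hc Hc] := choice loc.
have {}cB := @cover_compactP B cB.
have [|c _|D' _ Hcov] := cB B setT (fun c => [set x | F x - e < hc c x]).
- move=> c _; apply: open_ltf; first by apply: contD => //; exact: contC.
  exact: cP (Hc c).1.
- by exists c => //; exact: (Hc c).2.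
have key : forall s : seq B,
    P (foldr (fun c acc x => Num.max (hc c x) (acc x)) h0 s) /\
    forall c x, c \in s ->
      hc c x <= foldr (fun c acc x => Num.max (hc c x) (acc x)) h0 s x.
  elim=> [|a s [IHP IHle]] /=; first by split.
  split; first by apply: Pmax => //; exact: (Hc a).1.
  move=> c x; rewrite inE => /orP [/eqP -> | cs]; first by rewrite le_max lexx.
  by rewrite le_max (IHle c x cs) orbT.
have [kP kle] := key D'.
exists (foldr (fun c acc x => Num.max (hc c x) (acc x)) h0 D'); split => // x.
have [c Dc Hx] := Hcov x I.
by apply: lt_le_trans Hx _; apply: kle.
Qed.

Lemma cover_min (P : set (B -> R)) (F : B -> R) (e : R) :
  compact [set: B] -> continuous F -> (forall h, P h -> continuous h) ->
  (forall h1 h2, P h1 -> P h2 -> P (fun x => Num.min (h1 x) (h2 x))) ->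
  forall h0, P h0 ->
  (forall c, exists h, P h /\ h c < F c + e) ->
  exists h, P h /\ forall x, h x < F x + e.
Proof.
move=> cB cF cP Pmin h0 Ph0 loc.
have [hc Hc] := choice loc.
have {}cB := @cover_compactP B cB.
have [|c _|D' _ Hcov] := cB B setT (fun c => [set x | hc c x < F x + e]).
- move=> c _; apply: open_ltf; last by apply: contD => //; exact: contC.
  exact: cP (Hc c).1.
- by exists c => //; exact: (Hc c).2.
have key : forall s : seq B,
    P (foldr (fun c acc x => Num.min (hc c x) (acc x)) h0 s) /\
    forall c x, c \in s ->
      foldr (fun c acc x => Num.min (hc c x) (acc x)) h0 s x <= hc c x.
  elim=> [|a s [IHP IHle]] /=; first by split.
  split; first by apply: Pmin => //; exact: (Hc a).1.
  move=> c x; rewrite inE => /orP [/eqP -> | cs]; first by rewrite ge_min lexx.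
  by rewrite ge_min (IHle c x cs) orbT.
have [kP kle] := key D'.
exists (foldr (fun c acc x => Num.min (hc c x) (acc x)) h0 D'); split => // x.
have [c Dc Hx] := Hcov x I.
by apply: le_lt_trans Hx; apply: kle.
Qed.

Lemma eq_of_small (x y K : R) : 0 <= K ->
  (forall e, 0 < e -> x - y <= e * K /\ y - x <= e * K) -> x = y.
Proof.
move=> K0 H; apply/eqP; rewrite eq_le; apply/andP; split;
  apply/ler_addgt0Pr => e' e0;
  have e1 : 0 < e' / (K + 1) by apply: divr_gt0 => //; lra.
all: have [H1 H2] := H _ e1; set t := e' / (K + 1) in e1 H1 H2 *.
all: have te : t * (K + 1) = e' by rewrite /t; field; lra.
all: nra.
Qed.

Section Radon.
Variable L : (B -> R) -> R.
Hypothesis hL : positive_radon L.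

Lemma radon_sub (f g : B -> R) : continuous f -> continuous g ->
  L (fun x => f x - g x) = L f - L g.
Proof.
case: hL => Ladd Lsc _ cf cg.
have -> : (fun x => f x - g x) = (fun x => f x + (fun y => -1 * g y) x).
  by apply/funext => x /=; lra.
rewrite Ladd //; last exact: (contM _ _ cg).
by rewrite (Lsc (-1) g cg); lra.
Qed.

Lemma radon_lin (f g : B -> R) (c : R) : continuous f -> continuous g ->
  L (fun x => f x - g x + c) = L f - L g + c * L (fun _ => 1).
Proof.
case: hL => Ladd Lsc _ cf cg.
have -> : (fun x => f x - g x + c) =
   (fun x => (fun y => f y - g y) x + (fun y => c * (fun _ => 1) y) x).
  by apply/funext => x /=; lra.
rewrite Ladd; first last.
- by apply: contM; exact: contC.
- exact: contB.
by rewrite radon_sub // (Lsc c (fun _ => 1) (contC 1)).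
Qed.

Lemma radon_bound (f h : B -> R) (e : R) : continuous f -> continuous h ->
  (forall x, f x - e < h x /\ h x < f x + e) ->
  L f - L h <= e * L (fun _ => 1) /\ L h - L f <= e * L (fun _ => 1).
Proof.
move=> cf ch H.
have [_ _ Lpos] := hL.
have cfh : continuous (fun x => f x - h x + e).
  by apply: contD; [exact: contB|exact: contC].
have chf : continuous (fun x => h x - f x + e).
  by apply: contD; [exact: contB|exact: contC].
have P1 : 0 <= L (fun x => f x - h x + e).
  by apply: Lpos => // x; have := H x; lra.
have P2 : 0 <= L (fun x => h x - f x + e).
  by apply: Lpos => // x; have := H x; lra.
rewrite radon_lin // in P1; rewrite radon_lin // in P2.
split; lra.
Qed.
End Radon.

End Aux.

Section GP.
Variables (R : realType) (M : metricType R) (B : topologicalType)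
          (i : Mtilde M -> B).
Local Notation G := (Gset i).

Lemma Gcont g : G g -> continuous g.
Proof. by case. Qed.

Lemma Gadd g1 g2 : G g1 -> G g2 -> G (fun x => g1 x + g2 x).
Proof.
move=> [c1 H1] [c2 H2]; split; first exact: contD.
move=> p q r e1 e2 e3.
have := H1 p q r e1 e2 e3; have := H2 p q r e1 e2 e3; lra.
Qed.

Lemma Gscale a g : 0 <= a -> G g -> G (fun x => a * g x).
Proof.
move=> a0 [c H]; split; first by apply: contM.
move=> p q r e1 e2 e3.
have := H p q r e1 e2 e3; nra.
Qed.

Lemma Gconst a : 0 <= a -> G (fun _ => a).
Proof.
move=> a0; split; first exact: contC.
move=> p q r e1 e2 e3.
have := metric_triangle (set_val q).1 (set_val q).2 (set_val r).2.
rewrite -e1 -e3 e2; nra.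
Qed.

Lemma Gmax g1 g2 : G g1 -> G g2 -> G (fun x => Num.max (g1 x) (g2 x)).
Proof.
move=> [c1 H1] [c2 H2]; split; first exact: contMax.
move=> p q r e1 e2 e3.
have := H1 p q r e1 e2 e3; have := H2 p q r e1 e2 e3.
have dq := mdist_ge0 (set_val q).1 (set_val q).2.
have dr := mdist_ge0 (set_val r).1 (set_val r).2.
have mq1 : g1 (i q) <= Num.max (g1 (i q)) (g2 (i q)) by rewrite le_max lexx.
have mq2 : g2 (i q) <= Num.max (g1 (i q)) (g2 (i q)) by rewrite le_max lexx orbT.
have mr1 : g1 (i r) <= Num.max (g1 (i r)) (g2 (i r)) by rewrite le_max lexx.
have mr2 : g2 (i r) <= Num.max (g1 (i r)) (g2 (i r)) by rewrite le_max lexx orbT.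
set Mq := Num.max (g1 (i q)) _ in mq1 mq2 *.
set Mr := Num.max (g1 (i r)) _ in mr1 mr2 *.
have [_|_] := leP (g1 (i p)) (g2 (i p)); nra.
Qed.

Definition Lset (h : B -> R) :=
  exists g1 g2, [/\ G g1, G g2 & h = (fun x => g1 x - g2 x)].

Lemma Lcont h : Lset h -> continuous h.
Proof. by move=> [g1 [g2 [G1 G2 ->]]]; apply: contB; exact: Gcont. Qed.

Lemma LG g : G g -> Lset g.
Proof.
move=> Gg; exists g, (fun _ => 0); split => //; first exact: Gconst.
by apply/funext => x; rewrite subr0.
Qed.

Lemma Lconst a : Lset (fun _ => a).
Proof.
have [a0|a0] := leP 0 a.
  exists (fun _ => a), (fun _ => 0); split => //; try exact: Gconst.
  by apply/funext => x; rewrite subr0.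
exists (fun _ => 0), (fun _ => - a); split => //; try (apply: Gconst; lra).
by apply/funext => x; rewrite sub0r opprK.
Qed.

Lemma Lscale a h : Lset h -> Lset (fun x => a * h x).
Proof.
move=> [g1 [g2 [G1 G2 ->]]].
have [a0|a0] := leP 0 a.
  exists (fun x => a * g1 x), (fun x => a * g2 x); split => //; try exact: Gscale.
  by apply/funext => x; ring.
exists (fun x => (- a) * g2 x), (fun x => (- a) * g1 x);
  split => //; try (apply: Gscale => //; lra).
by apply/funext => x; ring.
Qed.

Lemma Ladd h1 h2 : Lset h1 -> Lset h2 -> Lset (fun x => h1 x + h2 x).
Proof.
move=> [g1 [g2 [G1 G2 ->]]] [k1 [k2 [K1 K2 ->]]].
exists (fun x => g1 x + k1 x), (fun x => g2 x + k2 x); split; try exact: Gadd.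
by apply/funext => x; ring.
Qed.

Lemma Lmax h1 h2 : Lset h1 -> Lset h2 -> Lset (fun x => Num.max (h1 x) (h2 x)).
Proof.
move=> [g1 [g2 [G1 G2 ->]]] [k1 [k2 [K1 K2 ->]]].
exists (fun x => Num.max (g1 x + k2 x) (k1 x + g2 x)), (fun x => g2 x + k2 x).
split; [by apply: Gmax; apply: Gadd|exact: Gadd|].
apply/funext => x.
by case: leP => H; case: leP => H'; lra.
Qed.

Lemma Lmin h1 h2 : Lset h1 -> Lset h2 -> Lset (fun x => Num.min (h1 x) (h2 x)).
Proof.
move=> L1 L2.
have -> : (fun x => Num.min (h1 x) (h2 x)) =
  (fun x => -1 * Num.max ((fun y => -1 * h1 y) x) ((fun y => -1 * h2 y) x)).
  by apply/funext => x /=; case: leP => H; case: leP => H'; lra.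
by apply: Lscale; apply: Lmax; apply: Lscale.
Qed.

End GP.
Arguments Lset {R M B} i h.

Theorem proposition3p3 (R : realType) (M : metricType R) (x0 : M)
  (Mcomplete : complete_space M)
  (three_points : exists x y z : M, [/\ x <> y, y <> z & x <> z])
  (B : topologicalType) (i : Mtilde M -> B)
  (hB : is_stone_cech i)
  (mu nu : (B -> R) -> R)
  (hmu : positive_radon mu) (hnu : positive_radon nu) :
  (Gle i mu nu /\ Gle i nu mu) <->
  radon_eq (qpush i mu) (qpush i nu).
Proof.
have [[cB _] _ _ _ _] := hB.
split; last first.
  move=> H.
  have Heq : forall g, Gset i g -> mu g = nu g.
    move=> g Gg.
    have cphi : continuous (g \o repr : MtildeG i -> R).
      apply: repr_comp_continuous; first exact: (@Gcont R M B i g Gg).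
      move=> a b /eqP E; apply/eqP.
      have : Grel i a b by apply/eqmodP.
      by move/asboolP; apply.
    have := H _ cphi; rewrite /qpush.
    have -> // : (g \o repr) \o qmap i = g.
    apply/funext => x /=.
    have : Grel i (repr (qmap i x)) x by apply/eqmodP; rewrite reprK.
    by move/asboolP; apply.
  by split => g Gg; rewrite Heq.
move=> [H1 H2] phi cphi.
have Heq : forall g, Gset i g -> mu g = nu g.
  by move=> g Gg; apply/le_anti; rewrite H1 // H2.
rewrite /qpush.
set F := phi \o qmap i.
have cF : continuous F.
  by move=> x; apply: continuous_comp; [exact: pi_continuous | exact: cphi].
have interp : forall b c, exists h, Lset i h /\ h b = F b /\ h c = F c.
  move=> b c.
  case Hbc: (Grel i b c).
    exists (fun _ => F b); split; first exact: Lconst.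
    split => //; rewrite /F /=; congr phi.
    by apply/eqmodP.
  have /asboolPn := negbT Hbc.
  move=> /existsNP [g /not_implyP [Gg gbc]].
  pose k := (F c - F b) / (g c - g b).
  exists (fun x => k * g x + (F b - k * g b)).
  split; first by apply: Ladd; [apply: Lscale; exact: LG | exact: Lconst].
  have nz : g c - g b != 0.
    by rewrite subr_eq0; apply/eqP => E; apply: gbc; rewrite E.
  split; first lra.
  by rewrite /k; field.
have approx : forall e, 0 < e ->
    exists h, Lset i h /\ forall x, F x - e < h x /\ h x < F x + e.
  move=> e e0.
  have stage1 : forall b, exists hb,
      (Lset i hb /\ hb b <= F b) /\ forall x, F x - e < hb x.
    move=> b.
    have [h0 [Lh0 [h0b _]]] := interp b b.
    apply: (@cover_max R B (fun h => Lset i h /\ h b <= F b) F e cB cF _ _ h0).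
    - by move=> h [Lh _]; exact: (@Lcont R M B i h Lh).
    - move=> h1 h2 [L1 b1] [L2 b2]; split; first exact: Lmax.
      by rewrite ge_max b1 b2.
    - by split => //; rewrite h0b.
    - move=> c; have [h [Lh [hb hc]]] := interp b c.
      exists h; split; first by split => //; rewrite hb.
      by rewrite hc; lra.
  have [[b0 _]|nB] := pselect (exists b : B, True); last first.
    exists (fun _ => 0); split; first exact: Lconst.
    by move=> x; exfalso; apply: nB; exists x.
  have [h1 [[L1 _] Hh1]] := stage1 b0.
  have [h [[Lh Hlow] Hup]] : exists h,
      (Lset i h /\ forall x, F x - e < h x) /\ forall x, h x < F x + e.
    apply: (@cover_min R B (fun h => Lset i h /\ forall x, F x - e < h x)
               F e cB cF _ _ h1).
    - by move=> h [Lh _]; exact: (@Lcont R M B i h Lh).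
    - move=> h h' [La Ha] [Lb Hb]; split; first exact: Lmin.
      by move=> x; rewrite lt_min Ha Hb.
    - by split.
    - move=> c; have [hc [[Lc hcc] Hc]] := stage1 c.
      by exists hc; split => //; lra.
  by exists h; split => // x; split.
have [_ _ mupos] := hmu.
have [_ _ nupos] := hnu.
have K0 : 0 <= mu (fun _ => 1) + nu (fun _ => 1).
  apply: addr_ge0; [apply: mupos|apply: nupos] => //; try exact: contC;
  by move=> _; exact: ler01.
apply: (@eq_of_small R _ _ _ K0) => e e0.
have [h [Lh Hh]] := approx e e0.
have ch := @Lcont R M B i h Lh.
have [m1 m2] := @radon_bound R B mu hmu F h e cF ch Hh.
have [n1 n2] := @radon_bound R B nu hnu F h e cF ch Hh.
have Emh : mu h = nu h.
  move: Lh => [g1 [g2 [G1 G2 hE]]].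
  have c1 := @Gcont R M B i g1 G1.
  have c2 := @Gcont R M B i g2 G2.
  rewrite hE (@radon_sub R B mu hmu g1 g2 c1 c2).
  by rewrite (@radon_sub R B nu hnu g1 g2 c1 c2) !Heq.
split; nra.
Qed.
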